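(* Let $r\ge3$, $n>r$, and $1<i<r$. In $T$ define $\zeta(T_{s_j})=(vF_jE_j-1)1_\omega$ for $1\le j<r$ and $\zeta(T_\rho)=(E_rE_{r+1}\cdots E_{n-1})(E_{r-1}E_{r-2}\cdots E_1)E_n1_\omega$. Then $\zeta(T_{s_{i-1}})\zeta(T_\rho)=\zeta(T_\rho)\zeta(T_{s_i})$.
   Context: $T$ is the $\mathbb{Q}(v)$-algebra with generators $E_i,F_i,K_i^{\pm1}$ ($1\le i\le n$, indices mod $n$) and relations: $K_iK_j=K_jK_i$; $K_iK_i^{-1}=K_i^{-1}K_i=1$; $K_iE_j=v^{\epsilon^+(i,j)}E_jK_i$; $K_iF_j=v^{-\epsilon^+(i,j)}F_jK_i$ ($\epsilon^+(i,j)=1$ if $j=i$, $-1$ if $j\equiv i-1\pmod n$, $0$ otherwise); $E_iF_j-F_jE_i=\delta_{ij}\frac{K_iK_{i+1}^{-1}-K_i^{-1}K_{i+1}}{v-v^{-1}}$; $E_iE_j=E_jE_i$, $F_iF_j=F_jF_i$ if $i-j\not\equiv\pm1$; $E_i^2E_j-(v+v^{-1})E_iE_jE_i+E_jE_i^2=0$, $F_i^2F_j-(v+v^{-1})F_iF_jF_i+F_jF_i^2=0$ if $i-j\equiv\pm1\pmod n$; $K_1\cdots K_n=v^r$; $\prod_{j=0}^r(K_i-v^j)=0$. For a composition $\lambda$ of $r$ into $n$ nonnegative parts, $1_\lambda=\prod_{i=1}^n\prod_{s=1}^{\lambda_i}\frac{K_iv^{-s+1}-K_i^{-1}v^{s-1}}{v^s-v^{-s}}$;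 $\omega=(1,\dots,1,0,\dots,0)$ with $r$ ones and $n-r$ zeros. *)

(* Defs.v *)
From HB Require Import structures.
From mathcomp Require Import all_boot all_order all_algebra.
From mathcomp Require Import fraction.
Set Implicit Arguments. Unset Strict Implicit. Unset Printing Implicit Defensive.
Import Order.TTheory GRing.Theory Num.Theory.
Local Open Scope ring_scope.

Definition Qv : fieldType := {fraction {poly rat}}.
Definition qv : Qv := tofrac ('X : {poly rat}).

Definition epsp (n i j : nat) : int :=
  if (j == i %[mod n])%N then 1
  else if (j.+1 == i %[mod n])%N then -1 else 0.

(* Defining relations of T, for families E F K Kinv : nat -> A of elements of a
   Q(v)-algebra A indexed by nat and n-periodic (index i stands for i mod n). *)
Definition T_rels (A : algType Qv) (n r : nat) (E F K Ki : nat -> A) : Prop :=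
  (forall k, E (k + n)%N = E k /\ F (k + n)%N = F k
                 /\ K (k + n)%N = K k /\ Ki (k + n)%N = Ki k) /\
      (forall i j, K i * K j = K j * K i) /\
      (forall i, K i * Ki i = 1 /\ Ki i * K i = 1) /\
      (forall i j, K i * E j = (qv ^ epsp n i j) *: (E j * K i)
                /\ K i * F j = (qv ^ (- epsp n i j)) *: (F j * K i)) /\
      (forall i j, E i * F j - F j * E i =
          if (i == j %[mod n])%N then
            (qv - qv^-1)^-1 *: (K i * Ki i.+1 - Ki i * K i.+1)
          else 0) /\
      (forall i j, ~~ (i == j.+1 %[mod n])%N -> ~~ (j == i.+1 %[mod n])%N ->
          E i * E j = E j * E i /\ F i * F j = F j * F i) /\
      (forall i j, ((i == j.+1 %[mod n]) || (j == i.+1 %[mod n]))%N ->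
          E i * E i * E j - (qv + qv^-1) *: (E i * E j * E i) + E j * E i * E i = 0
       /\ F i * F i * F j - (qv + qv^-1) *: (F i * F j * F i) + F j * F i * F i = 0) /\
      \prod_(1 <= i < n.+1) K i = (qv ^+ r)%:A /\
      (forall i, \prod_(0 <= j < r.+1) (K i - (qv ^+ j)%:A) = 0).

Definition one_lam (A : algType Qv) (n : nat) (K Ki : nat -> A) (lam : nat -> nat) : A :=
  \prod_(1 <= i < n.+1) \prod_(1 <= s < (lam i).+1)
     ((qv ^ (s%:Z) - qv ^ (- s%:Z))^-1 *:
        (qv ^ (1 - s%:Z) *: K i - qv ^ (s%:Z - 1) *: Ki i)).

Definition omega (r : nat) : nat -> nat := fun i => if (1 <= i <= r)%N then 1%N else 0%N.

Definition one_omega (A : algType Qv) (n r : nat) (K Ki : nat -> A) : A :=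
  one_lam n K Ki (omega r).

Definition zeta_s (A : algType Qv) (n r : nat) (E F K Ki : nat -> A) (j : nat) : A :=
  (qv *: (F j * E j) - 1) * one_omega n r K Ki.

Definition zeta_rho (A : algType Qv) (n r : nat) (E K Ki : nat -> A) : A :=
  (\prod_(r <= k < n) E k) * (\prod_(k <- rev (iota 1 r.-1)) E k)
    * E n * one_omega n r K Ki.

(* Main.v *)
Require Import Defs.
From HB Require Import structures.
From mathcomp Require Import all_boot all_order all_algebra.
From mathcomp Require Import fraction qpoly.
From mathcomp Require Import ring zify.
Set Implicit Arguments. Unset Strict Implicit. Unset Printing Implicit Defensive.
Import GRing.Theory.
Local Open Scope ring_scope.

Lemma qvXn k : qv ^+ k = tofrac ('X^k : {poly rat}).
Proof. by rewrite /qv -rmorphXn. Qed.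

Lemma qvX_inj : injective (fun k : nat => qv ^+ k).
Proof.
move=> i j /= /eqP; rewrite !qvXn tofrac_eq => /eqP h; move: (congr1 (fun p : {poly rat} => size p) h) => /=.
by rewrite !size_polyXn => -[].
Qed.

Lemma qv_neq0 : qv != 0.
Proof. by rewrite /qv tofrac_eq0 polyX_eq0. Qed.

Lemma qvX_neq1 k : qv ^+ k.+1 != 1.
Proof. apply/eqP => h. have := @qvX_inj k.+1 0. by rewrite expr0 h => /(_ erefl). Qed.

Lemma qv_sub_neq0 : qv - qv^-1 != 0.
Proof.
rewrite subr_eq0; apply/eqP => h.
have : qv ^+ 2 = 1 by rewrite expr2 {1}h mulVf // qv_neq0.
by apply/eqP/qvX_neq1.
Qed.

Lemma qvinv_neqX m : qv^-1 != qv ^+ m.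
Proof.
apply/eqP => h. have : qv ^+ m.+1 = 1 by rewrite exprS -h mulfV // qv_neq0.
by apply/eqP/qvX_neq1.
Qed.

Lemma modn_range n k : (0 < k <= n)%N -> (k %% n = if k == n then 0 else k)%N.
Proof.
move=> /andP [k0 kn]; case: eqP => [->|ne]; first by rewrite modnn.
by rewrite modn_small //; rewrite ltn_neqAle kn andbT; apply/eqP.
Qed.

Lemma eqmod_range n i j : (0 < i <= n)%N -> (0 < j <= n)%N ->
  (i == j %[mod n])%N = (i == j).
Proof.
move=> hi hj; rewrite (modn_range hi) (modn_range hj).
move: hi hj => /andP [? ?] /andP [? ?].
case: (i =P n) => [->|ni]; case: (j =P n) => [->|nj]; rewrite ?eqxx //.
- by apply/eqP; case: eqP => // ?; lia.
- by apply/eqP; case: eqP => // ?; lia.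
Qed.

Lemma epspE n i j : (0 < i <= n)%N -> (0 < j < n)%N ->
  epsp n i j = (i == j)%:Z - (i == j.+1)%:Z.
Proof.
move=> hi /andP [j0 jn].
have hj : (0 < j <= n)%N by apply/andP; split => //; apply: ltnW.
have hj1 : (0 < j.+1 <= n)%N by [].
rewrite /epsp (eqmod_range hj hi) (eqmod_range hj1 hi) [j == i]eq_sym [j.+1 == i]eq_sym.
case: (i =P j) => [->|_]; first by rewrite (_ : (j == j.+1) = false) //; apply/eqP; lia.
by case: (i =P j.+1).
Qed.

Lemma epspN n i : (1 < n)%N -> (0 < i <= n)%N ->
  epsp n i n = (i == n)%:Z - (i == 1%N)%:Z.
Proof.
move=> n1 hi.
have hn : (0 < n <= n)%N by rewrite leqnn andbT; lia.
rewrite /epsp (eqmod_range hn hi) [n == i]eq_sym.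
case: (i =P n) => [->|ni]; first by rewrite (_ : (n == 1%N) = false) //; apply/eqP; lia.
have -> : (n.+1 == i %[mod n])%N = (i == 1%N).
  rewrite -addn1 -modnDml modnn add0n (modn_small n1) (modn_range hi) (negbTE (introN eqP ni)).
  by rewrite eq_sym.
by case: (i =P 1%N).
Qed.
Local Close Scope ring_scope.

Lemma comb n r (mu : nat -> nat) i : r < n -> (forall j, 0 < j <= r -> 0 < mu j) ->
  \sum_(1 <= l < n.+1) mu l = r -> 0 < i <= n -> mu i = omega r i.
Proof.
move=> rn hpos hs hi.
have ge : forall l, 0 < l <= n -> omega r l <= mu l.
  move=> l hl; rewrite /omega; case: ifP => // h; exact: hpos.
have sw : \sum_(1 <= l < n.+1) omega r l = r.
  rewrite (big_cat_nat (n := r.+1)) //; last by lia.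
  rewrite (eq_big_nat _ _ (F2 := fun _ => 1)); last first.
    by move=> l hl; rewrite /omega (_ : (1 <= l <= r) = true) //; lia.
  rewrite [\sum_(r.+1 <= l < n.+1) _](eq_big_nat _ _ (F2 := fun _ => 0)); last first.
    by move=> l hl; rewrite /omega (_ : (1 <= l <= r) = false) //; lia.
  rewrite !sum_nat_const_nat /= muln1 muln0 addn0; lia.
have sd : \sum_(1 <= l < n.+1) (mu l - omega r l) = 0.
  have : \sum_(1 <= l < n.+1) mu l = \sum_(1 <= l < n.+1) omega r l + \sum_(1 <= l < n.+1) (mu l - omega r l).
    rewrite -big_split /=; apply: eq_big_nat => l hl; rewrite subnKC //; apply: ge; lia.
  rewrite hs sw; lia.
have hin : i \in index_iota 1 n.+1 by rewrite mem_index_iota; lia.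
move: sd; rewrite (bigD1_seq i hin (iota_uniq _ _)) /= => sd.
have := ge i hi; lia.
Qed.

Local Open Scope ring_scope.

Section Dec.
Variables (A : algType Qv) (n r : nat) (E F K Ki : nat -> A).
Hypothesis HT : T_rels n r E F K Ki.

Let HKK : forall i j, K i * K j = K j * K i. Proof. by case: HT => _ [? _]. Qed.
Let HKi : forall i, K i * Ki i = 1 /\ Ki i * K i = 1. Proof. by case: HT => _ [_ [? _]]. Qed.
Let Hprod : \prod_(1 <= i < n.+1) K i = (qv ^+ r)%:A.
Proof. by case: HT => _ [_ [_ [_ [_ [_ [_ [? _]]]]]]]. Qed.
Let Hpol : forall i, \prod_(0 <= j < r.+1) (K i - (qv ^+ j)%:A) = 0.
Proof. by case: HT => _ [_ [_ [_ [_ [_ [_ [_ ?]]]]]]]. Qed.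

Let xq (j : nat) : Qv := qv ^+ j.
Let xq_inj : injective xq. Proof. exact: qvX_inj. Qed.
Let r1_gt0 : (0 < r.+1)%N. Proof. by []. Qed.

Definition Lg (k : 'I_r.+1) : {poly Qv} := tnth (r.+1.-lagrange xq) k.
Definition G (l : nat) (k : 'I_r.+1) : A := horner_alg (K l) (Lg k).

Lemma phi_comm (a : A) l p : a * K l = K l * a ->
  a * horner_alg (K l) p = horner_alg (K l) p * a.
Proof.
move=> h; elim/poly_ind: p => [|p c IH]; first by rewrite rmorph0 mulr0 mul0r.
rewrite rmorphD rmorphM /= horner_algX horner_algC mulrDr mulrDl mulrA IH.
by rewrite -[_ * a * K l]mulrA h -mulrA (comm_alg c a).
Qed.

Lemma G_comm_K l k j : G l k * K j = K j * G l k.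
Proof. by rewrite -phi_comm // HKK. Qed.

Lemma G_comm l k l' k' : G l k * G l' k' = G l' k' * G l k.
Proof. by rewrite /G phi_comm //; rewrite -/(G l k) G_comm_K. Qed.

Lemma G_sum l : \sum_(k < r.+1) G l k = 1.
Proof.
have hs : (size (1%R : {poly Qv}) <= r.+1)%N by rewrite size_poly1.
have := lagrange_gen r1_gt0 xq_inj hs.
move/(congr1 (horner_alg (K l))); rewrite rmorph1 rmorph_sum => ->.
by apply: eq_bigr => k _; rewrite hornerC mul1r.
Qed.

Lemma G_eig l k : K l * G l k = xq k *: G l k.
Proof.
have e : (K l - (xq k)%:A) * G l k = 0.
  have -> : K l - (xq k)%:A = horner_alg (K l) ('X - (xq k)%:P).
    by rewrite rmorphB /= horner_algX horner_algC.
  rewrite /G -rmorphM /Lg lagrangeE //= mulrCA.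
  have -> : ('X - (xq k)%:P) * (\prod_(j < r.+1 | j != k) ('X - (xq j)%:P))
            = \prod_(j < r.+1) ('X - (xq j)%:P) by rewrite [RHS](bigD1 k).
  rewrite rmorphM rmorph_prod /=.
  have -> : \prod_(j < r.+1) horner_alg (K l) ('X - (xq j)%:P) = 0.
    rewrite -(Hpol l) big_mkord; apply: eq_bigr => j _.
    by rewrite rmorphB /= horner_algX horner_algC.
  by rewrite mulr0.
by apply/eqP; rewrite -subr_eq0 -mulr_algl -mulrBl e.
Qed.


Lemma G_prod_comm (a : A) (s : seq nat) (mu : nat -> 'I_r.+1) :
  (forall l, a * G l (mu l) = G l (mu l) * a) ->
  a * \prod_(l <- s) G l (mu l) = (\prod_(l <- s) G l (mu l)) * a.
Proof.
move=> h; apply: (big_ind (fun z => a * z = z * a)); first by rewrite mulr1 mul1r.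
  by move=> z1 z2 e1 e2; rewrite mulrA e1 -mulrA e2 mulrA.
by move=> l _; exact: h.
Qed.

Lemma sep m y : (forall mu : nat -> 'I_r.+1, (\prod_(1 <= l < m.+1) G l (mu l)) * y = 0) -> y = 0.
Proof.
elim: m y => [|m IH] y h.
  by have := h (fun _ => ord0); rewrite big_geq // mul1r.
apply: IH => mu.
set P := \prod_(1 <= l < m.+1) G l (mu l).
rewrite -[P * y]mul1r -(G_sum m.+1) mulr_suml big1 // => k _.
pose mu' := fun l => if l == m.+1 then k else mu l.
have := h mu'; rewrite big_nat_recr //= {2}/mu' eqxx.
have -> : \prod_(1 <= l < m.+1) G l (mu' l) = P.
  apply: eq_big_nat => l /andP [_ hl]; rewrite /mu'.
  by rewrite (_ : (l == m.+1) = false) //; apply/eqP; lia.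
by rewrite mulrA /P G_prod_comm // => l; exact: G_comm.
Qed.


Lemma e_eigK (mu : nat -> 'I_r.+1) j : (0 < j <= n)%N ->
  (\prod_(1 <= l < n.+1) G l (mu l)) * K j = xq (mu j) *: \prod_(1 <= l < n.+1) G l (mu l).
Proof.
move=> /andP [j0 jn].
rewrite (big_cat_nat (n := j)); [|lia|lia].
rewrite (big_ltn (m := j)); last by lia.
rewrite -!mulrA -(G_prod_comm (a := K j)); last by move=> l; rewrite G_comm_K.
by rewrite [G j _ * (K j * _)]mulrA G_comm_K G_eig -scalerAl -scalerAr.
Qed.

Lemma e_eigKi (mu : nat -> 'I_r.+1) j : (0 < j <= n)%N ->
  (\prod_(1 <= l < n.+1) G l (mu l)) * Ki j = (xq (mu j))^-1 *: \prod_(1 <= l < n.+1) G l (mu l).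
Proof.
move=> hj; set e := \prod_(1 <= l < n.+1) G l (mu l).
have hx : xq (mu j) != 0 by rewrite expf_neq0 // qv_neq0.
have : e = xq (mu j) *: (e * Ki j).
  by rewrite scalerAl -e_eigK // -mulrA (proj1 (HKi j)) mulr1.
by move=> {2}->; rewrite scalerA mulVf // scale1r.
Qed.

Lemma push_prod (e : A) (s : seq nat) (f : nat -> A) (c : nat -> Qv) :
  (forall t, t \in s -> e * f t = c t *: e) ->
  e * \prod_(t <- s) f t = (\prod_(t <- s) c t) *: e.
Proof.
elim: s => [|t s IH] h; first by rewrite !big_nil mulr1 scale1r.
rewrite !big_cons mulrA h ?mem_head // -scalerAl IH ?scalerA //.
by move=> t' ht'; apply: h; rewrite in_cons ht' orbT.
Qed.

Lemma wt_u_dec : (r < n)%N -> forall i, (0 < i <= n)%N ->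
  K i * one_omega n r K Ki = qv ^ ((omega r i)%:Z) *: one_omega n r K Ki.
Proof.
move=> rn i hi; apply/eqP; rewrite -subr_eq0; apply/eqP.
apply: (sep (m := n)) => mu.
set e := \prod_(1 <= l < n.+1) G l (mu l).
set u := one_omega n r K Ki.
pose s := \prod_(1 <= j < n.+1) \prod_(1 <= t < (omega r j).+1)
   ((qv ^ (t%:Z) - qv ^ (- t%:Z))^-1 *
      (qv ^ (1 - t%:Z) * xq (mu j) - qv ^ (t%:Z - 1) * (xq (mu j))^-1)).
have es : e * u = s *: e.
  rewrite /u /one_omega /one_lam /s; apply: push_prod => j; rewrite mem_index_iota => hj.
  have hj' : (0 < j <= n)%N by lia.
  apply: push_prod => t _.
  rewrite -scalerAr mulrBr -!scalerAr e_eigK // e_eigKi // !scalerA -scalerBl scalerA.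
  by rewrite [qv ^ (1 - _) * _]mulrC [qv ^ (_ - 1) * _]mulrC.
rewrite mulrBr mulrA e_eigK // -scalerAl -scalerAr es !scalerA -scalerBl.
case: (e =P 0) => [->|enz]; first by rewrite scaler0.
have hsum : (\sum_(1 <= l < n.+1) (mu l : nat))%N = r.
  have h1 : e * \prod_(1 <= l < n.+1) K l = (\prod_(1 <= l < n.+1) xq (mu l)) *: e.
    by apply: push_prod => l; rewrite mem_index_iota => hl; apply: e_eigK; lia.
  rewrite Hprod mulr_algr prodrXr in h1.
  move/eqP: h1; rewrite -subr_eq0 -scalerBl scaler_eq0 (negbTE (introN eqP enz)) orbF.
  by rewrite subr_eq0 => /eqP /qvX_inj.
case hz : (has (fun j => (mu j : nat) == 0%N) (index_iota 1 r.+1)).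
  have -> : s = 0.
    apply/eqP; rewrite /s prodf_seq_eq0; move/hasP: hz => [j hj /eqP mj].
    apply/hasP; exists j; first by move: hj; rewrite !mem_index_iota; lia.
    move: hj; rewrite mem_index_iota => hj.
    rewrite /omega (_ : (1 <= j <= r)%N = true); last by lia.
    rewrite big_nat1 /= mj /xq expr0 invr1 subrr mulr0 //.
  by rewrite !mulr0 subrr scale0r.
have hpos : forall j, (0 < j <= r)%N -> (0 < mu j)%N.
  move=> j hj; move/hasP: hz => hz; rewrite lt0n; apply/negP => /eqP h0.
  by apply: hz; exists j; [rewrite mem_index_iota; lia | rewrite h0].
have := comb (mu := fun l => (mu l : nat)) rn hpos hsum hi => /= ->.
by rewrite subrr scale0r.
Qed.

End Dec.

Section Main.
Variables (A : algType Qv) (n r : nat) (E F K Ki : nat -> A).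
Hypothesis HT : T_rels n r E F K Ki.
Hypothesis n_gt2 : (2 < n)%N.

Let HKK : forall i j, K i * K j = K j * K i. Proof. by case: HT => _ [? _]. Qed.
Let HKi : forall i, K i * Ki i = 1 /\ Ki i * K i = 1. Proof. by case: HT => _ [_ [? _]]. Qed.
Let HKE : forall i j, K i * E j = (qv ^ epsp n i j) *: (E j * K i)
                /\ K i * F j = (qv ^ (- epsp n i j)) *: (F j * K i).
Proof. by case: HT => _ [_ [_ [? _]]]. Qed.
Let HEF : forall i j, E i * F j - F j * E i =
          if (i == j %[mod n])%N then
            (qv - qv^-1)^-1 *: (K i * Ki i.+1 - Ki i * K i.+1)
          else 0.
Proof. by case: HT => _ [_ [_ [_ [? _]]]]. Qed.
Let HEE : forall i j, ~~ (i == j.+1 %[mod n])%N -> ~~ (j == i.+1 %[mod n])%N ->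
          E i * E j = E j * E i /\ F i * F j = F j * F i.
Proof. by case: HT => _ [_ [_ [_ [_ [? _]]]]]. Qed.
Let Hprod : \prod_(1 <= i < n.+1) K i = (qv ^+ r)%:A.
Proof. by case: HT => _ [_ [_ [_ [_ [_ [_ [? _]]]]]]]. Qed.
Let Hpol : forall i, \prod_(0 <= j < r.+1) (K i - (qv ^+ j)%:A) = 0.
Proof. by case: HT => _ [_ [_ [_ [_ [_ [_ [_ ?]]]]]]]. Qed.

Definition wt (lam : nat -> int) (y : A) :=
  forall i, (0 < i <= n)%N -> K i * y = qv ^ (lam i) *: y.

Lemma wt_ext lam lam' y : wt lam y -> (forall i, (0 < i <= n)%N -> lam i = lam' i) -> wt lam' y.
Proof. by move=> h e i hi; rewrite -e // h. Qed.

Lemma wtE lam y j : wt lam y -> wt (fun i => lam i + epsp n i j) (E j * y).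
Proof.
move=> h i hi; rewrite mulrA (proj1 (HKE i j)) -scalerAl -mulrA h // scalerAr scalerA.
by rewrite expfzDr ?qv_neq0 // -scalerAr; congr (_ *: _); rewrite mulrC.
Qed.

Lemma wtF lam y j : wt lam y -> wt (fun i => lam i - epsp n i j) (F j * y).
Proof.
move=> h i hi; rewrite mulrA (proj2 (HKE i j)) -scalerAl -mulrA h // scalerAr scalerA.
by rewrite expfzDr ?qv_neq0 // -scalerAr; congr (_ *: _); rewrite mulrC.
Qed.

Lemma wtKi lam y i : wt lam y -> (0 < i <= n)%N -> Ki i * y = qv ^ (- lam i) *: y.
Proof.
move=> h hi.
have e : y = qv ^ (lam i) *: (Ki i * y).
  by rewrite scalerAr -h // mulrA (proj2 (HKi i)) mul1r.
by rewrite {2}e scalerA -expfzDr ?qv_neq0 // addNr expr0z scale1r.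
Qed.

Lemma prod_act (s : seq nat) (c : nat -> Qv) (k : nat) (x : Qv) (y : A) :
  K k * y = x *: y ->
  (\prod_(j <- s) (K k - (c j)%:A)) * y = (\prod_(j <- s) (x - c j)) *: y.
Proof.
move=> h; elim: s => [|t s IH]; first by rewrite !big_nil mul1r scale1r.
rewrite !big_cons -mulrA IH -scalerAr mulrBl h mulr_algl -scalerBl scalerA mulrC.
by [].
Qed.

Lemma wt_vanish lam y k : wt lam y -> (0 < k <= n)%N -> lam k = -1 -> y = 0.
Proof.
move=> h hk e.
have := prod_act (index_iota 0 r.+1) (fun j => qv ^+ j) (h k hk).
rewrite Hpol mul0r e exprN1 => /esym /eqP; rewrite scaler_eq0 => /orP [|/eqP//].
rewrite prodf_seq_eq0 => /hasP [j _ /=]; rewrite subr_eq0.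
by rewrite (negPf (qvinv_neqX j)).
Qed.

Lemma wt_H lam y j : wt lam y -> (0 < j)%N -> (j < n)%N ->
  (E j * F j - F j * E j) * y =
  ((qv - qv^-1)^-1 * (qv ^ (lam j) * qv ^ (- lam j.+1) - qv ^ (- lam j) * qv ^ (lam j.+1))) *: y.
Proof.
move=> h j0 jn; rewrite HEF eqxx -scalerAl -scalerA; congr (_ *: _).
have hj : (0 < j <= n)%N by apply/andP; split=> //; apply: ltnW.
have hj1 : (0 < j.+1 <= n)%N by [].
rewrite mulrBl -!mulrA (wtKi h hj1) (h _ hj1) -!scalerAr (h _ hj) (wtKi h hj) !scalerA.
by rewrite -scalerBl [qv ^ (- lam j.+1) * _]mulrC [qv ^ lam j.+1 * _]mulrC.
Qed.


Lemma commEF i j : (0 < i <= n)%N -> (0 < j <= n)%N -> i != j -> E i * F j = F j * E i.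
Proof.
move=> hi hj ne; apply/eqP; rewrite -subr_eq0 HEF (eqmod_range hi hj).
by rewrite (negbTE ne).
Qed.

Definition hc (x y : int) : Qv :=
  (qv - qv^-1)^-1 * (qv ^ x * qv ^ (- y) - qv ^ (- x) * qv ^ y).

Lemma hcE x y : hc x y = (qv - qv^-1)^-1 * (qv ^ (x - y) - qv ^ (y - x)).
Proof. by rewrite /hc !expfzDr ?qv_neq0 // [qv ^ (- x) * _]mulrC. Qed.

Lemma hc0 x : hc x x = 0.
Proof. by rewrite hcE subrr mulr0. Qed.

Lemma hc1 x y : x = y + 1 -> hc x y = 1.
Proof.
move=> ->; have e1 : y + 1 - y = 1 by ring.
have e2 : y - (y + 1) = -1 by ring.
rewrite hcE e1 e2.
by rewrite expr1z exprN1 mulVf // qv_sub_neq0.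
Qed.

Lemma hcN1 x y : y = x + 1 -> hc x y = -1.
Proof.
move=> ->; have e1 : x + 1 - x = 1 by ring.
have e2 : x - (x + 1) = -1 by ring.
rewrite hcE e1 e2.
by rewrite expr1z exprN1 -[qv^-1 - qv]opprB mulrN mulVf // qv_sub_neq0.
Qed.

Lemma HW lam y j : wt lam y -> (0 < j)%N -> (j < n)%N ->
  E j * (F j * y) - F j * (E j * y) = hc (lam j) (lam j.+1) *: y.
Proof. by move=> h j0 jn; rewrite !mulrA -mulrBl (wt_H h j0 jn). Qed.

Lemma key a b mu W : b = a.+1 -> (0 < a)%N -> (b.+1 < n)%N -> wt mu W ->
  mu a = 0 -> mu b = 1 -> mu b.+1 = 1 ->
  F a * (E a * (E b * (E a * W))) = E b * (E a * (F b * (E b * W))).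
Proof.
move=> eb a0 bn h ma mb mb1.
have ha : (0 < a <= n)%N by apply/andP; split => //; lia.
have hb : (0 < b <= n)%N by apply/andP; split => //; lia.
have hb1 : (0 < b.+1 <= n)%N by apply/andP; split => //; lia.
have an : (0 < a < n)%N by apply/andP; split => //; lia.
have bn' : (0 < b < n)%N by apply/andP; split => //; lia.
have nab : a != b by apply/eqP; lia.
have a_n : (a < n)%N by lia.
have nba : b != a by rewrite eq_sym.
have b_n : (b < n)%N by lia.
have b0 : (0 < b)%N by lia.
have FaW : F a * W = 0.
  apply: (wt_vanish (wtF a h) ha); rewrite /= ma (epspE ha an) eqxx; lia.
have h1 := wtE a h.
have h2 := wtE b h1.
have FaEaW : F a * (E a * W) = W.
  have := HW h a0 a_n; rewrite -eb FaW mulr0 ma mb hcN1 //.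
  by rewrite sub0r scaleN1r => /oppr_inj.
have L : F a * (E a * (E b * (E a * W))) = E a * (E b * W).
  have := HW h2 a0 a_n; rewrite -eb /=.
  have -> : mu a + epsp n a a + epsp n a b = 1.
    rewrite ma (epspE ha an) (epspE ha bn'); lia.
  have -> : mu b + epsp n b a + epsp n b b = 1.
    rewrite mb (epspE hb an) (epspE hb bn'); lia.
  rewrite hc0 scale0r => /eqP; rewrite subr_eq0 => /eqP <-.
  by rewrite [F a * (E b * _)]mulrA -(commEF hb ha nba) -mulrA FaEaW.
rewrite L.
have hz1 := wtE b h.
have hz2 := wtE a hz1.
rewrite [E a * (F b * _)]mulrA (commEF ha hb nab).
rewrite -mulrA.
have := HW hz2 b0 b_n.
rewrite /= hc1; last first.
  rewrite mb mb1 (epspE hb an) (epspE hb bn') (epspE hb1 an) (epspE hb1 bn'); lia.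
have -> : E b * (E a * (E b * W)) = 0.
  apply: (wt_vanish (wtE b hz2) hb1).
  rewrite /= mb1 (epspE hb1 an) (epspE hb1 bn'); lia.
by rewrite mulr0 subr0 scale1r.
Qed.


Definition om (i : nat) : int := (omega r i)%:Z.

Lemma rev_iotaS m : rev (iota 1 m.+1) = m.+1 :: rev (iota 1 m).
Proof. by rewrite -[m.+1]addn1 iotaD rev_cat add1n addn1. Qed.

Lemma chainA y m : wt om y -> (m < n)%N ->
  wt (fun i => om i + (i == n)%:Z - (i == m.+1)%:Z)
     ((\prod_(k <- rev (iota 1 m)) E k) * (E n * y)).
Proof.
move=> h; elim: m => [|m IH] mn.
  rewrite big_nil mul1r; apply: wt_ext (wtE n h) _ => i hi.
  rewrite (epspN (ltnW n_gt2) hi); lia.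
rewrite rev_iotaS big_cons -mulrA.
apply: wt_ext (wtE m.+1 (IH (ltnW mn))) _ => i hi.
have hm : (0 < m.+1 < n)%N by [].
rewrite (epspE hi hm); lia.
Qed.

Lemma chainB y d : wt (fun i => om i + (i == n)%:Z - (i == r)%:Z) y ->
  (0 < r)%N -> (d <= n - r)%N ->
  wt (fun i => om i + (i == (n - d)%N)%:Z - (i == r)%:Z)
     ((\prod_(k <- iota (n - d)%N d) E k) * y).
Proof.
move=> h r0; elim: d => [|d IH] dn.
  by rewrite big_nil mul1r subn0.
have e : iota (n - d.+1)%N d.+1 = (n - d.+1)%N :: iota (n - d)%N d.
  by rewrite /= (_ : (n - d.+1).+1 = n - d)%N //; lia.
rewrite e big_cons -mulrA.
apply: wt_ext (wtE (n - d.+1)%N (IH (ltnW dn))) _ => i hi.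
have hm : (0 < n - d.+1 < n)%N by apply/andP; split; lia.
rewrite (epspE hi hm); lia.
Qed.

Lemma fix_u y : wt om y -> one_omega n r K Ki * y = y.
Proof.
move=> h; rewrite /one_omega /one_lam big_seq.
apply: (big_ind (fun x => x * y = y)); first by rewrite mul1r.
  by move=> x z hx hz; rewrite -mulrA hz hx.
move=> i; rewrite mem_index_iota => hi.
have hi' : (0 < i <= n)%N by lia.
rewrite big_seq.
apply: (big_ind (fun x => x * y = y)); first by rewrite mul1r.
  by move=> x z hx hz; rewrite -mulrA hz hx.
move=> s; rewrite mem_index_iota => hs.
have o1 : omega r i = 1%N by move: hs; rewrite /omega; case: ifP => //; lia.
have s1 : s = 1%N by move: hs; rewrite o1; lia.
subst s.
rewrite -scalerAl mulrBl -!scalerAl (h i hi') (wtKi h hi') /om o1 !scalerA -scalerBl scalerA.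
have e0 : (1 - 1%Z : int) = 0 by [].
have e0' : (1%Z - 1 : int) = 0 by [].
rewrite e0 ?e0' expr0z !mul1r expr1z exprN1 mulVf ?scale1r //.
exact: qv_sub_neq0.
Qed.


Lemma wt_lin lam y1 y2 (c : Qv) : wt lam y1 -> wt lam y2 -> wt lam (c *: y1 - y2).
Proof.
move=> h1 h2 i hi; rewrite mulrBr -scalerAr h1 // h2 // scalerBr !scalerA.
by rewrite mulrC.
Qed.

Lemma comm_prod (x : A) (s : seq nat) :
  (forall k, k \in s -> x * E k = E k * x) ->
  x * \prod_(k <- s) E k = (\prod_(k <- s) E k) * x.
Proof.
move=> h; rewrite big_seq.
apply: (big_ind (fun z => x * z = z * x)); first by rewrite mulr1 mul1r.
  by move=> z1 z2 e1 e2; rewrite mulrA e1 -mulrA e2 mulrA.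
exact: h.
Qed.

Lemma commFE i k : (0 < i <= n)%N -> (0 < k <= n)%N -> i != k ->
  ~~ (i == k.+1 %[mod n])%N -> ~~ (k == i.+1 %[mod n])%N ->
  (F i * E i) * E k = E k * (F i * E i).
Proof.
move=> hi hk ne h1 h2.
rewrite -mulrA (proj1 (HEE h1 h2)) mulrA -(commEF hk hi) ?mulrA //.
by rewrite eq_sym.
Qed.


Lemma main i : (3 <= r)%N -> (r < n)%N -> (1 < i)%N -> (i < r)%N ->
  zeta_s n r E F K Ki i.-1 * zeta_rho n r E K Ki
  = zeta_rho n r E K Ki * zeta_s n r E F K Ki i.
Proof.
move=> r3 rn i1 ir.
have wt_u : wt om (one_omega n r K Ki).
  by move=> k hk; have := wt_u_dec HT rn hk; rewrite /om.
set u := one_omega n r K Ki.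
set a := i.-1.
have eb : i = a.+1 by rewrite /a prednK //; lia.
set b := i.
set R0 := \prod_(k <- rev (iota 1 a.-1)) E k.
set R1 := \prod_(k <- rev (iota b.+1 (r.-1 - b))) E k.
set P := \prod_(r <= k < n) E k.
have eR : \prod_(k <- rev (iota 1 r.-1)) E k = R1 * (E b * (E a * R0)).
  have -> : r.-1 = (a.-1 + (2 + (r.-1 - b)))%N by lia.
  rewrite iotaD iotaD !rev_cat !big_cat /=.
  have -> : (1 + a.-1 = a)%N by lia.
  have -> : (a + 2 = b.+1)%N by lia.
  by rewrite /= !big_cons big_nil mulr1 -eb -/R1 -/R0 !mulrA.
set W := R0 * (E n * u).
have hW : wt (fun k => om k + (k == n)%:Z - (k == a)%:Z) W.
  apply: wt_ext (chainA wt_u (m := a.-1) _) _; first by lia.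
  by move=> k _; rewrite prednK //; lia.
have eXu : zeta_rho n r E K Ki = P * (R1 * (E b * (E a * W))).
  by rewrite /zeta_rho eR /W -/u -/P !mulrA.
have wXu : wt om (zeta_rho n r E K Ki).
  have h0 := chainA wt_u (m := r.-1) (leq_ltn_trans (leq_pred r) rn).
  rewrite prednK in h0; last by lia.
  have r0 : (0 < r)%N by lia.
  have h1 := chainB (d := (n - r)%N) h0 r0 (leqnn _).
  rewrite subKn in h1; last by lia.
  rewrite /zeta_rho -!mulrA -/u.
  apply: wt_ext h1 _ => k _; lia.
have ha : (0 < a <= n)%N by apply/andP; split; lia.
have hb : (0 < b <= n)%N by apply/andP; split; lia.
have cA : forall k, (b < k < n)%N -> (F a * E a) * E k = E k * (F a * E a).
  move=> k /andP [k1 k2].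
  have hk : (0 < k <= n)%N by apply/andP; split; lia.
  have hk1 : (0 < k.+1 <= n)%N by apply/andP; split; lia.
  have ha1 : (0 < a.+1 <= n)%N by apply/andP; split; lia.
  apply: commFE => //; first by apply/eqP; lia.
    by rewrite (eqmod_range ha hk1); apply/eqP; lia.
  by rewrite (eqmod_range hk ha1); apply/eqP; lia.
have cB : forall k, (0 < k < a)%N -> (F b * E b) * E k = E k * (F b * E b).
  move=> k /andP [k1 k2].
  have hk : (0 < k <= n)%N by apply/andP; split; lia.
  have hk1 : (0 < k.+1 <= n)%N by apply/andP; split; lia.
  have hb1 : (0 < b.+1 <= n)%N by apply/andP; split; lia.
  apply: commFE => //; first by apply/eqP; lia.
    by rewrite (eqmod_range hb hk1); apply/eqP; lia.
  by rewrite (eqmod_range hk hb1); apply/eqP; lia.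
have cBn : (F b * E b) * E n = E n * (F b * E b).
  have hn : (0 < n <= n)%N by apply/andP; split; lia.
  have hb1 : (0 < b.+1 <= n)%N by apply/andP; split; lia.
  apply: commFE => //; first by apply/eqP; lia.
    rewrite -addn1 -modnDml modnn add0n modn_small; last by lia.
    by rewrite modn_small; [apply/eqP; lia | lia].
  by rewrite (eqmod_range hn hb1); apply/eqP; lia.
have cP : (F a * E a) * P = P * (F a * E a).
  apply: comm_prod => k; rewrite mem_index_iota => hk; apply: cA; lia.
have cR1 : (F a * E a) * R1 = R1 * (F a * E a).
  apply: comm_prod => k; rewrite mem_rev mem_iota => hk; apply: cA; lia.
have cR0 : (F b * E b) * R0 = R0 * (F b * E b).
  apply: comm_prod => k; rewrite mem_rev mem_iota => hk; apply: cB; lia.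
have hFW : F b * (E b * W) = R0 * (E n * (F b * (E b * u))).
  by rewrite /W !mulrA cR0 -[R0 * _ * E n]mulrA cBn !mulrA.
have a0 : (0 < a)%N by lia.
have bn : (b.+1 < n)%N by lia.
have hk := key eb a0 bn hW.
rewrite /= in hk.
have e1 : om a + (a == n)%:Z - (a == a)%:Z = 0.
  rewrite /om /omega (_ : (1 <= a <= r)%N = true); last by apply/andP; split; lia.
  lia.
have e2 : om b + (b == n)%:Z - (b == a)%:Z = 1.
  rewrite /om /omega (_ : (1 <= b <= r)%N = true); last by apply/andP; split; lia.
  lia.
have e3 : om b.+1 + (b.+1 == n)%:Z - (b.+1 == a)%:Z = 1.
  rewrite /om /omega (_ : (1 <= b.+1 <= r)%N = true); last by apply/andP; split; lia.
  lia.
move: {hk} (hk e1 e2 e3) => hk.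
set X' := P * (R1 * (E b * (E a * R0))) * E n.
have eZ : zeta_rho n r E K Ki = X' * u by rewrite /zeta_rho eR.
have wy : wt om (qv *: (F b * (E b * u)) - u).
  apply: wt_lin => //; apply: wt_ext (wtF b (wtE b wt_u)) _ => k _ /=; lia.
rewrite /zeta_s -/u -mulrA (fix_u wXu) mulrBl mul1r -scalerAl.
rewrite [in RHS]eZ -mulrA mulrBl mul1r -scalerAl -[F b * E b * u]mulrA (fix_u wy).
rewrite mulrBr -eZ -scalerAr; congr (_ *: _ - _).
rewrite eXu [F a * E a * (P * _)]mulrA cP -[P * _ * _]mulrA [F a * E a * (R1 * _)]mulrA cR1 -[R1 * _ * _]mulrA -[F a * E a * _]mulrA hk hFW.
by rewrite /X' !mulrA.
Qed.

End Main.

Unset Implicit Arguments.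

Theorem corollary2p3p7 (A : algType Qv) (n r i : nat) (E F K Ki : nat -> A) :
  (3 <= r)%N -> (r < n)%N -> (1 < i)%N -> (i < r)%N ->
  T_rels n r E F K Ki ->
  zeta_s n r E F K Ki i.-1 * zeta_rho n r E K Ki
  = zeta_rho n r E K Ki * zeta_s n r E F K Ki i.
Proof.
move=> r3 rn i1 ir HT.
have n2 : (2 < n)%N by lia.
exact: (main HT n2 r3 rn i1 ir).
Qed.
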